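(* With the setup of the context, assume that $\overline H$ satisfies the bunkbed conjecture and let $\mu$ be a symmetric weight on $F$. Then for all $x,y\in V(\overline H)$, $\mathbb P_{F,\mu}(x^-\sim_F y^+)\le \mathbb P_{F,\mu}(x^-\sim_F y^-)$.
   Context: All graphs are finite and simple. For a graph $G$, a weight is a function $\mu\colon E(G)\to[0,1]$; the associated edge-percolation probability space has sample space $\mathscr P(E(G))$, with $\mathbb P_{G,\mu}(X)=\prod_{e\in X}\mu(e)\prod_{e\notin X}(1-\mu(e))$ for $X\subseteq E(G)$ (edges independently open, edge $e$ with probability $\mu(e)$). For vertices $x,y$, $(x\sim_G y)$ is the event that $x$ and $y$ are joined by a path of open edges of $G$. The bunkbed graph $BB(G)=G\,\Box\,K_2$ has vertex set $V(G)\times\{0,1\}$, writing $x^-=(x,0)$, $x^+=(x,1)$, with edges $x^-y^-$ and $x^+y^+$ for every $xy\in E(G)$ and vertical edges $x^-x^+$ for every $x\in V(G)$. A weight $\mu$ on $BB(G)$ is symmetric if $\mu(x^-y^-)=\mu(x^+y^+)$ for every $xy\in E(G)$. A graph $G$ satisfies the bunkbed conjecture if for every symmetric weight $\mu$ on $BB(G)$ and all $x,y\in V(G)$, $\mathbb P_{BB(G),\mu}(x^-\sim y^-)\ge \mathbb P_{BB(G),\mu}(x^-\sim y^+)$. Setup: let $\overline F$ be a graph and $v\in V(\overline F)$ a cut vertex; let $V_1,\dots,V_k$ ($k\ge2$) be the vertex sets of the components of $\overline F\setminus\{v\}$, fix $I\subseteq\{1,\dots,k\}$, and set $\overline G=\overline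 F[\bigcup_{i\in I}V_i\cup\{v\}]$, $\overline H=\overline F[\bigcup_{i\notin I}V_i\cup\{v\}]$ (induced subgraphs). Let $F=BB(\overline F)$, $G=BB(\overline G)$, $H=BB(\overline H)$, regarded as subgraphs of $F$. *)

(* Defs.v *)
From HB Require Import structures.
From mathcomp Require Import all_boot all_order all_algebra.
From mathcomp Require Import reals.
Set Implicit Arguments. Unset Strict Implicit. Unset Printing Implicit Defensive.
Import Order.TTheory GRing.Theory Num.Theory.
Local Open Scope ring_scope.

Definition simple_graph (W : finType) (r : rel W) : Prop :=
  symmetric r /\ irreflexive r.

(* Bunkbed graph BB(G) = G [] K_2 on W * bool;  x^- = (x,false), x^+ = (x,true). *)
Definition bb_adj (W : finType) (r : rel W) : rel (W * bool) :=
  fun p q => ((p.2 == q.2) && r p.1 q.1) || ((p.1 == q.1) && (p.2 != q.2)).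

Definition bb_edges (W : finType) (r : rel W) : {set {set (W * bool)}} :=
  [set X | [exists p, exists q, (X == [set p; q]) && bb_adj r p q]].

Definition is_weight (R : realType) (T : finType) (E : {set {set T}})
  (mu : {set T} -> R) : Prop :=
  forall ed, ed \in E -> 0 <= mu ed <= 1.

Definition bb_symmetric (R : realType) (W : finType) (r : rel W)
  (mu : {set (W * bool)} -> R) : Prop :=
  forall a b, r a b ->
    mu [set (a, false); (b, false)] = mu [set (a, true); (b, true)].

Definition perc_prob (R : realType) (T : finType) (E : {set {set T}})
  (mu : {set T} -> R) (A : pred {set {set T}}) : R :=
  \sum_(X in powerset E | A X)
     ((\prod_(ed in X) mu ed) * (\prod_(ed in E :\: X) (1 - mu ed))).

Definition joined (T : finType) (p q : T) : pred {set {set T}} :=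
  fun X => connect (fun a b => [set a; b] \in X) p q.

Definition bb_prob (R : realType) (W : finType) (r : rel W)
  (mu : {set (W * bool)} -> R) (p q : W * bool) : R :=
  perc_prob (bb_edges r) mu (joined p q).

Definition bunkbed (R : realType) (W : finType) (r : rel W) : Prop :=
  forall mu : {set (W * bool)} -> R,
    is_weight (bb_edges r) mu -> bb_symmetric r mu ->
    forall x y : W,
      bb_prob r mu (x, false) (y, true) <= bb_prob r mu (x, false) (y, false).

Definition del_rel (V : finType) (e : rel V) (v : V) : rel V :=
  fun x y => [&& x != v, y != v & e x y].

Definition comp_of (V : finType) (e : rel V) (v x : V) : {set V} :=
  [set y | (y != v) && connect (del_rel e v) x y].

Definition comps (V : finType) (e : rel V) (v : V) : {set {set V}} :=
  [set comp_of e v x | x in [set~ v]].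

Definition G_verts (V : finType) (e : rel V) (v : V) (I : {set {set V}}) : {set V} :=
  v |: \bigcup_(C in comps e v :&: I) C.
Definition H_verts (V : finType) (e : rel V) (v : V) (I : {set {set V}}) : {set V} :=
  v |: \bigcup_(C in comps e v :\: I) C.

Definition induced (V : finType) (e : rel V) (S : {set V}) : rel {x : V | x \in S} :=
  fun a b => e (val a) (val b).
Arguments induced {V} e S.

(* Main.v *)
Require Import Defs.
From HB Require Import structures.
From mathcomp Require Import all_boot all_order all_algebra.
From mathcomp Require Import reals.
From mathcomp Require Import ring lra.
Set Implicit Arguments. Unset Strict Implicit. Unset Printing Implicit Defensive.
Import Order.TTheory GRing.Theory Num.Theory.

Section Comp.
Variables (V : finType) (e : rel V) (v : V) (I : {set {set V}}).
Hypothesis esym : symmetric e.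

Local Notation D := (del_rel e v).
Local Notation Hs := (H_verts e v I).
Local Notation Gs := (G_verts e v I).

Lemma D_sym : symmetric D.
Proof. by move=> a b; rewrite /del_rel esym andbCA. Qed.

Lemma comp_eq x y : y \in comp_of e v x -> comp_of e v y = comp_of e v x.
Proof.
rewrite inE => /andP[_ cxy]; apply/setP => z; rewrite !inE.
congr (_ && _); apply/idP/idP => h.
  exact: connect_trans cxy h.
by apply: connect_trans h; rewrite (sym_connect_sym D_sym).
Qed.

Lemma comp_self y : y != v -> y \in comp_of e v y.
Proof. by move=> yv; rewrite inE yv connect0. Qed.

Lemma memH y : y != v -> (y \in Hs) = (comp_of e v y \notin I).
Proof.
move=> yv; rewrite /H_verts !inE (negbTE yv) /=; apply/idP/idP.
  move=> /bigcupP[C]; rewrite !inE => /andP[CI /imsetP[x _ Cx]] yC.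
  by rewrite Cx in yC CI; rewrite (comp_eq yC).
move=> nI; apply/bigcupP; exists (comp_of e v y); last exact: comp_self.
by rewrite !inE nI /=; apply/imsetP; exists y; rewrite ?inE.
Qed.

Lemma memG y : y != v -> (y \in Gs) = (comp_of e v y \in I).
Proof.
move=> yv; rewrite /G_verts !inE (negbTE yv) /=; apply/idP/idP.
  move=> /bigcupP[C]; rewrite !inE => /andP[/imsetP[x _ Cx] CI] yC.
  by rewrite Cx in yC CI; rewrite (comp_eq yC).
move=> nI; apply/bigcupP; exists (comp_of e v y); last exact: comp_self.
by rewrite !inE nI andbT; apply/imsetP; exists y; rewrite ?inE.
Qed.

Lemma vH : v \in Hs. Proof. by rewrite !inE eqxx. Qed.
Lemma vG : v \in Gs. Proof. by rewrite !inE eqxx. Qed.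

Lemma HG y : y \in Hs -> y \in Gs -> y = v.
Proof.
case: (eqVneq y v) => // yv; rewrite memH // memG // => /negbTE ->; done.
Qed.

Lemma HorG y : (y \in Hs) || (y \in Gs).
Proof.
case: (eqVneq y v) => [->|yv]; first by rewrite vH.
by rewrite memH // memG //; case: (_ \in I).
Qed.

Lemma edge_side a b : e a b -> (a \in Hs) && (b \in Hs) || (a \in Gs) && (b \in Gs).
Proof.
move=> eab.
case: (eqVneq a v) => [->|av]; first by rewrite vH vG /=; exact: HorG.
case: (eqVneq b v) => [->|bv]; first by rewrite vH vG /= !andbT; exact: HorG.
have bC : b \in comp_of e v a.
  by rewrite inE bv connect1 // /del_rel av bv eab.
rewrite !memH // !memG // (comp_eq bC).
by case: (_ \in I).
Qed.

End Comp.

Lemma set2_eq (T : finType) (a c x y : T) : x != y ->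
  [set a; c] = [set x; y] -> (a = x /\ c = y) \/ (a = y /\ c = x).
Proof.
move=> xy E.
have hx : x \in [set a; c] by rewrite E set21.
have hy : y \in [set a; c] by rewrite E set22.
have ha : a \in [set x; y] by rewrite -E set21.
have hc : c \in [set x; y] by rewrite -E set22.
move: hx hy ha hc; rewrite !inE => hx hy /orP[]/eqP ha /orP[]/eqP hc; subst; auto.
- by move: hy; rewrite orbb eq_sym (negbTE xy).
- by move: hx; rewrite orbb (negbTE xy).
Qed.

Lemma sub2 (T : finType) (a c : T) (A : {set T}) : [set a; c] \subset A -> a \in A /\ c \in A.
Proof. by move=> /subsetP h; split; apply: h; rewrite ?set21 ?set22. Qed.

Lemma closed_ind (T : finType) (r : rel T) (P : T -> Prop) x y :
  P x -> (forall a b, P a -> r a b -> P b) -> connect r x y -> P y.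
Proof.
move=> Px st /connectP[pth]; elim: pth x Px => [|z pth IH] x Px /=.
  by move=> _ ->.
by move=> /andP[rxz pz] ly; apply: (IH z) => //; apply: st rxz.
Qed.

Definition relX (T : finType) (X : {set {set T}}) : rel T := fun a b => [set a; b] \in X.

Lemma relX_sym (T : finType) (X : {set {set T}}) : symmetric (relX X).
Proof. by move=> a b; rewrite /relX setUC. Qed.

Lemma joinedE (T : finType) (p q : T) X : joined p q X = connect (relX X) p q.
Proof. by []. Qed.

Lemma joined_mono (T : finType) (X Y : {set {set T}}) p q : X \subset Y ->
  joined p q X -> joined p q Y.
Proof.
move=> XY; rewrite !joinedE; apply: connect_sub => a b h.
by apply: connect1; rewrite /relX (subsetP XY).
Qed.

Section Edges.
Variables (V : finType) (e : rel V) (v : V) (I : {set {set V}}).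
Hypothesis esym : symmetric e.
Hypothesis eirr : irreflexive e.

Local Notation Hs := (H_verts e v I).
Local Notation Gs := (G_verts e v I).
Definition setH := [set w : V * bool | w.1 \in Hs].
Definition setG := [set w : V * bool | w.1 \in Gs].
Local Notation E := (bb_edges e).
Lemma inSH w : (w \in setH) = (w.1 \in Hs). Proof. by rewrite /setH in_set. Qed.
Lemma inSG w : (w \in setG) = (w.1 \in Gs). Proof. by rewrite /setG in_set. Qed.
Definition EHf := [set ed in E | ed \subset setH].
Definition EG := [set ed in E | ed \subset setG].
Definition e0 : {set V * bool} := [set (v, false); (v, true)].
Definition EH' := EHf :\ e0.
Definition EG' := EG :\ e0.

Lemma bb_edgesP ed : reflect (exists p q, ed = [set p; q] /\ bb_adj e p q) (ed \in E).
Proof.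
rewrite inE; apply: (iffP existsP) => [[p /existsP[q /andP[/eqP -> h]]]|[p [q [-> h]]]].
  by exists p, q.
by exists p; apply/existsP; exists q; rewrite eqxx h.
Qed.

Lemma EHfE ed : (ed \in EHf) = (ed \in E) && (ed \subset setH).
Proof. by rewrite /EHf in_set. Qed.
Lemma EGE ed : (ed \in EG) = (ed \in E) && (ed \subset setG).
Proof. by rewrite /EG in_set. Qed.

Lemma e0_E : e0 \in E.
Proof. apply/bb_edgesP; exists (v, false), (v, true); split => //; by rewrite /bb_adj /= eqxx. Qed.

Lemma e0_sub (S : {set V}) : v \in S -> e0 \subset [set w : V * bool | w.1 \in S].
Proof. by move=> vS; apply/subsetP => w; rewrite !inE => /orP[] /eqP -> /=. Qed.

Lemma e0_EHf : e0 \in EHf.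
Proof. by rewrite EHfE e0_E e0_sub // vH. Qed.
Lemma e0_EG : e0 \in EG.
Proof. by rewrite EGE e0_E e0_sub // vG. Qed.

Lemma cover ed : ed \in E -> (ed \in EHf) || (ed \in EG).
Proof.
move=> edE; rewrite EHfE EGE edE /=; move/bb_edgesP: edE => [p [q [-> h]]].
move: h; rewrite /bb_adj => /orP[/andP[_ epq]|/andP[/eqP pq _]].
  case/orP: (edge_side v I esym epq) => /andP[h1 h2]; [apply/orP; left|apply/orP; right];
    by apply/subsetP => w /set2P[] ->; rewrite ?inSH ?inSG.
case/orP: (HorG v I esym p.1) => h; [apply/orP; left|apply/orP; right];
  by apply/subsetP => w /set2P[] ->; rewrite ?inSH ?inSG // -pq.
Qed.

Lemma inter ed : ed \in EHf -> ed \in EG -> ed = e0.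
Proof.
rewrite EHfE EGE => /andP[edE sH] /andP[_ sG].
move/bb_edgesP: edE => [p [q [edpq h]]]; rewrite edpq in sH sG *.
have [pH qH] := sub2 sH; have [pG qG] := sub2 sG.
rewrite inSH inSG in pH pG; rewrite inSH inSG in qH qG.
have pv := HG esym pH pG; have qv := HG esym qH qG.
move: h; rewrite /bb_adj pv qv eirr andbF /= eqxx /=.
case: p q pv qv {edpq sH sG pH qH pG qG} => [p1 [|]] [q1 [|]] //= -> -> _.
  by rewrite /e0 setUC.
by [].
Qed.

Lemma E_decomp : E = (e0 |: EH') :|: EG'.
Proof.
apply/setP => ed; rewrite /EH' /EG' in_setU in_setU1 !in_setD1; apply/idP/idP.
  move=> edE; case: (eqVneq ed e0) => //= _.
  by have := cover edE.
move=> /orP[/orP[/eqP ->|]|]; first exact: e0_E.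
  by rewrite EHfE => /and3P[].
by rewrite EGE => /and3P[].
Qed.

Lemma E_disj : [disjoint (e0 |: EH') & EG'].
Proof.
rewrite -setI_eq0; apply/eqP/setP => ed; rewrite /EH' /EG' in_setI in_setU1 !in_setD1 in_set0.
apply/negP => /andP[/orP[/eqP ->|/andP[ne hH]] /andP[ne' hG]]; first by rewrite eqxx in ne'.
by rewrite (inter hH hG) eqxx in ne.
Qed.

Lemma e0_pair a c : [set a; c] = e0 ->
  (a = (v, false) /\ c = (v, true)) \/ (a = (v, true) /\ c = (v, false)).
Proof. by move=> h; apply: set2_eq h; rewrite xpair_eqE eqxx. Qed.

Lemma e0_H w : w \in e0 -> w \in setH.
Proof. by move=> h; apply: (subsetP (e0_sub (vH e v I))). Qed.

Lemma e0_rel (X : {set {set V * bool}}) s t : e0 \in X -> s != t -> relX X (v, s) (v, t).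
Proof.
move=> h; case: s; case: t => //= _; rewrite /relX setUC; exact: h.
Qed.

Lemma joined_split_aux (X1 X2 X Y : {set {set V * bool}}) (b C : bool) p q :
  X1 \subset EH' -> X2 \subset EG' -> p \in setH -> q \in setH ->
  C = joined (v, false) (v, true) X2 ->
  Y = (if b || C then e0 |: X1 else X1) ->
  X = (if b then e0 |: X1 else X1) :|: X2 ->
  joined p q X = joined p q Y.
Proof.
move=> X1s X2s pH qH CE YE XE.
have X1Y : X1 \subset Y by rewrite YE; case: (b || C) => //; rewrite subsetUr.
have e0Y : b || C -> e0 \in Y by rewrite YE; case: (b || C) => // _; rewrite setU11.
have X1X : X1 \subset X.
  by rewrite XE; apply: subset_trans (subsetUl _ _); case: ifP => _ //; rewrite subsetUr.
have X2X : X2 \subset X by rewrite XE subsetUr.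
have X1H : forall a c, [set a; c] \in X1 -> a \in setH /\ c \in setH.
  move=> a c h; have := subsetP X1s _ h; rewrite in_setD1 EHfE => /and3P[_ _].
  exact: sub2.
have X2G : forall a c, [set a; c] \in X2 -> a \in setG /\ c \in setG.
  move=> a c h; have := subsetP X2s _ h; rewrite in_setD1 EGE => /and3P[_ _].
  exact: sub2.
have hX : forall a c, [set a; c] \in X ->
    [set a; c] \in X2 \/ [set a; c] \in X1 \/ (b /\ [set a; c] = e0).
  move=> a c; rewrite XE in_setU; case: ifP => hb.
    by rewrite in_setU1 => /orP[/orP[/eqP h|h]|h]; auto.
  by move=> /orP[h|h]; auto.
have G3 : forall w0 w, connect (relX X2) w0 w -> w0 \in setG -> w \in setG.
  move=> w0 w cw h; apply: (closed_ind (P := fun w => w \in setG)) cw => //.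
  by move=> a c _ /X2G[].
have L : forall s w, connect (relX Y) p (v, s) -> connect (relX X2) (v, s) w ->
    w \in setH -> connect (relX Y) p w.
  move=> s [w1 t] ps sw wH.
  have wG : (w1, t) \in setG by apply: G3 sw _; rewrite inSG /= (vG e v I).
  rewrite inSH /= in wH; rewrite inSG /= in wG.
  have w1v := HG esym wH wG; subst w1.
  case: (eqVneq s t) => [<-|st] //.
  have hC : C.
    rewrite CE; move: st sw; clear ps; case: s; case: t => // _ sw.
    by rewrite joinedE (sym_connect_sym (relX_sym X2)).
  apply: connect_trans ps (connect1 (e0_rel _ st)).
  by apply: e0Y; rewrite hC orbT.
have toH : forall w, ((w \in setH /\ connect (relX Y) p w) \/
    (exists s, connect (relX Y) p (v, s) /\ connect (relX X2) (v, s) w)) ->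
    w \in setH -> connect (relX Y) p w.
  move=> w [[_ //]|[s [h1 h2]]] wH; exact: L h1 h2 wH.
apply/idP/idP.
  move=> cX; apply: (toH q) => //; rewrite joinedE in cX.
  apply: (closed_ind (P := fun w => (w \in setH /\ connect (relX Y) p w) \/
    (exists s, connect (relX Y) p (v, s) /\ connect (relX X2) (v, s) w)) _ _ cX); first by left; split => //; exact: connect0.
  move=> a c Qa /hX [h|[h|[hb h]]].
  - right; case: Qa => [[aH pa]|[s [ps sa]]].
      have [aG _] := X2G _ _ h.
      have av : a.1 = v by apply: (HG (I:=I) esym); [rewrite -inSH | rewrite -inSG].
      exists a.2; split; first by rewrite -av -surjective_pairing.
      by apply: connect1; rewrite -av -surjective_pairing.
    exists s; split => //; apply: connect_trans sa (connect1 _); exact: h.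
  - have [aH cH] := X1H _ _ h.
    left; split => //; apply: connect_trans (toH _ Qa aH) (connect1 _).
    by rewrite /relX (subsetP X1Y).
  - have aH : a \in setH by apply: e0_H; rewrite -h set21.
    have cH : c \in setH by apply: e0_H; rewrite -h set22.
    left; split => //; apply: connect_trans (toH _ Qa aH) (connect1 _).
    by rewrite /relX h; apply: e0Y; rewrite hb.
rewrite !joinedE; apply: connect_sub => a c.
rewrite /relX YE; case: ifP => hbC; last by move=> h; apply: connect1; rewrite /relX (subsetP X1X).
rewrite in_setU1 => /orP[/eqP h|h]; last by apply: connect1; rewrite /relX (subsetP X1X).
have cvv : connect (relX X) (v, false) (v, true).
  move: hbC; case/orP => [hb|hC].
    by apply: connect1; rewrite /relX XE hb in_setU setU11.
  by rewrite -joinedE; apply: joined_mono X2X _; rewrite -CE.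
case: (e0_pair h) => [[-> ->]|[-> ->]] //.
by rewrite (sym_connect_sym (relX_sym X)).
Qed.

Lemma joined_split (X1 X2 : {set {set V * bool}}) (b : bool) p q :
  X1 \subset EH' -> X2 \subset EG' -> p \in setH -> q \in setH ->
  joined p q ((if b then e0 |: X1 else X1) :|: X2) =
  joined p q (if b || joined (v, false) (v, true) X2 then e0 |: X1 else X1).
Proof. by move=> h1 h2 h3 h4; apply: (joined_split_aux (b:=b) h1 h2 h3 h4 erefl erefl erefl). Qed.

End Edges.

Lemma imset_pair (T T' : finType) (f : T -> T') a c : f @: [set a; c] = [set f a; f c].
Proof. by rewrite imsetU1 imset_set1. Qed.

Lemma joined_transport (T T' : finType) (f : T -> T') (X : {set {set T}}) p q :
  injective f ->
  joined (f p) (f q) [set f @: ed | ed : {set T} in X] = joined p q X.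
Proof.
move=> fi.
have key : forall a c, relX [set f @: ed | ed : {set T} in X] (f a) (f c) = relX X a c.
  by move=> a c; rewrite /relX -imset_pair (mem_imset _ _ (imset_inj fi)).
rewrite !joinedE; apply/idP/idP => h.
  have : exists w0, f q = f w0 /\ connect (relX X) p w0.
    apply: (closed_ind (P := fun w => exists w0, w = f w0 /\ connect (relX X) p w0)) h.
      by exists p; split => //; exact: connect0.
    move=> a c [a0 [-> pa]] /=; rewrite /relX => /imsetP[ed edX edE].
    have : c \in f @: ed by rewrite -edE set22.
    move=> /imsetP[c0 _ cE]; subst c; exists c0; split => //.
    have edE' : ed = [set a0; c0].
      by apply: (imset_inj fi); rewrite -edE imset_pair.
    apply: connect_trans pa (connect1 _); by rewrite /relX -edE'.
  by move=> [w0 [/fi -> ]].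
apply: (closed_ind (P := fun w => connect (relX [set f @: ed | ed : {set T} in X]) (f p) (f w))) h.
  exact: connect0.
by move=> a c pa ac; apply: connect_trans pa (connect1 _); rewrite key.
Qed.

Local Open Scope ring_scope.

Section Perc.
Variable R : comNzRingType.

Definition wt (T : finType) (E : {set {set T}}) (mu : {set T} -> R) (X : {set {set T}}) :=
  \prod_(ed in X) mu ed * \prod_(ed in E :\: X) (1 - mu ed).

Definition S (T : finType) (E : {set {set T}}) (mu : {set T} -> R) (f : {set {set T}} -> R) :=
  \sum_(X in powerset E) wt E mu X * f X.

Lemma S0 T mu (f : {set {set T}} -> R) : S (set0 : {set {set T}}) mu f = f set0.
Proof.
rewrite /S powerset0 big_set1 /wt big_set0 setD0 big_set0 !mul1r //.
Qed.

Lemma S_OE T (E : {set {set T}}) a mu (f : {set {set T}} -> R) : a \notin E ->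
  S (a |: E) mu f = S E mu (fun X => mu a * f (a |: X) + (1 - mu a) * f X).
Proof.
move=> aE.
have nXa : forall X : {set {set T}}, X \subset E -> a \notin X.
  by move=> X XE; exact: (contra (@subsetP _ _ _ XE a) aE).
rewrite /S (bigID (fun X : {set {set T}} => a \in X)) /= addrC.
under [in RHS]eq_bigr do rewrite mulrDr.
rewrite big_split /= addrC.
congr (_ + _).
- rewrite (eq_bigl (fun X => X \in (fun Y => a |: Y) @: powerset E)); last first.
    move=> X; apply/andP/imsetP => [[]|[Y]].
      rewrite powersetE => XaE aX; exists (X :\ a); last by rewrite setD1K.
      rewrite powersetE; apply/subsetP => z; rewrite !inE => /andP[za zX].
      by have := subsetP XaE z zX; rewrite !inE (negbTE za).
    rewrite powersetE => YE ->; rewrite powersetE setUS // setU11; split => //.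
  rewrite big_imset; last first.
    move=> X Y; rewrite !powersetE => XE YE /= eXY.
    apply/setP => z; have := congr1 (fun W : {set {set T}} => z \in W) eXY; rewrite !inE /=.
    case: eqP => [->|_] //=.
    by rewrite (negbTE (nXa _ XE)) (negbTE (nXa _ YE)).
  apply: eq_bigr => X; rewrite powersetE => XE.
  rewrite /wt big_setU1 ?nXa //=.
  have -> : (a |: E) :\: (a |: X) = E :\: X.
    apply/setP => z; rewrite !inE; case: eqP => [->|] //=.
    by rewrite (negbTE aE) andbF.
  ring.
- rewrite (eq_bigl (fun X => X \in powerset E)); last first.
    move=> X; rewrite !powersetE; apply/andP/idP => [[XaE aX]|XE].
      apply/subsetP => z zX; have := subsetP XaE z zX; rewrite !inE.
      by case: eqP => [zeq|//]; rewrite -zeq zX in aX.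
    by rewrite nXa // (subset_trans XE) // subsetUr.
  apply: eq_bigr => X; rewrite powersetE => XE.
  rewrite /wt.
  have -> : (a |: E) :\: X = a |: (E :\: X).
    apply/setP => z; rewrite !inE; case: eqP => [->|] //=.
    by rewrite (negbTE (nXa _ XE)).
  rewrite big_setU1 /=; last by rewrite !inE (negbTE aE) andbF.
  ring.
Qed.

Lemma S_ext T (E : {set {set T}}) mu (f g : {set {set T}} -> R) :
  (forall X : {set {set T}}, X \subset E -> f X = g X) -> S E mu f = S E mu g.
Proof.
move=> h; apply: eq_bigr => X; rewrite powersetE => XE; by rewrite h.
Qed.

Lemma S_mu_ext T (E : {set {set T}}) mu mu' (f : {set {set T}} -> R) :
  (forall ed, ed \in E -> mu ed = mu' ed) -> S E mu f = S E mu' f.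
Proof.
move=> h; apply: eq_bigr => X; rewrite powersetE => XE; rewrite /wt.
congr (_ * _ * _); apply: eq_bigr => ed.
  by move=> edX; rewrite h // (subsetP XE).
by rewrite inE => /andP[_ edE]; rewrite h.
Qed.

Lemma S_lin T (E : {set {set T}}) mu c d (f g : {set {set T}} -> R) :
  S E mu (fun X => c * f X + d * g X) = c * S E mu f + d * S E mu g.
Proof.
rewrite /S !mulr_sumr -big_split /=; apply: eq_bigr => X _; ring.
Qed.

Lemma set_ind (T : finType) (P : {set T} -> Prop) :
  P set0 -> (forall (a : T) (A : {set T}), a \notin A -> P A -> P (a |: A)) -> forall A, P A.
Proof.
move=> P0 Ps A; move: {2}#|A| (erefl #|A|) => n; elim: n A => [|n IH] A cA; first by move/eqP: cA; rewrite cards_eq0 => /eqP ->.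
case: (set_0Vmem A) => [A0|[a aA]]; first by rewrite A0 cards0 in cA.
rewrite -(setD1K aA); apply: Ps; first by rewrite !inE eqxx.
by apply: IH; move: cA; rewrite (cardsD1 a A) aA add1n => -[].
Qed.

Lemma S_const T (E : {set {set T}}) mu c : S E mu (fun _ => c) = c.
Proof.
elim/set_ind: E => [|a E aE IH]; first by rewrite S0.
rewrite S_OE //; have -> : mu a * c + (1 - mu a) * c = c by ring. by [].
Qed.


Lemma S_split T (E2 E1 : {set {set T}}) mu (f : {set {set T}} -> R) : [disjoint E1 & E2] ->
  S (E1 :|: E2) mu f = S E1 mu (fun X1 => S E2 mu (fun X2 => f (X1 :|: X2))).
Proof.
elim/set_ind: E2 f => [|a E2 aE2 IH] f dis.
  by rewrite setU0; apply: S_ext => X _; rewrite S0 setU0.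
have aE1 : a \notin E1.
  by rewrite (disjointFl dis) // setU11.
have dis2 : [disjoint E1 & E2].
  by apply: disjointWr dis; rewrite subsetUr.
rewrite setUCA S_OE; last by rewrite !inE negb_or aE1.
rewrite IH //; apply: S_ext => X1 _; rewrite S_OE //.
by apply: S_ext => X2 _; rewrite setUCA.
Qed.

Lemma S_transport T T' (h : {set T} -> {set T'}) (E : {set {set T}}) mu (f : {set {set T'}} -> R) :
  injective h ->
  S (h @: E) mu f = S E (fun ed => mu (h ed)) (fun X => f (h @: X)).
Proof.
move=> hi; elim/set_ind: E f => [|a E aE IH] f.
  by rewrite imset0 !S0 imset0.
rewrite imsetU1 [LHS]S_OE; last by rewrite (mem_imset _ _ hi).
rewrite IH S_OE //; apply: S_ext => X _; by rewrite imsetU1.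
Qed.

End Perc.

Section Bound.
Variable R : realDomainType.

Lemma S_bound T (E : {set {set T}}) (mu : {set T} -> R) (f : {set {set T}} -> R) :
  (forall ed, ed \in E -> 0 <= mu ed <= 1) ->
  (forall X : {set {set T}}, X \subset E -> 0 <= f X <= 1) -> 0 <= S E mu f <= 1.
Proof.
elim/set_ind: E f => [|a E aE IH] f hmu hf.
  by rewrite S0; apply: hf; rewrite sub0set.
rewrite S_OE //; apply: IH.
  by move=> ed edE; apply: hmu; rewrite !inE edE orbT.
move=> X XE.
have /andP[m0 m1] := hmu a (setU11 a E).
have /andP[f0 f1] : 0 <= f (a |: X) <= 1 by apply: hf; rewrite setUS.
have /andP[g0 g1] : 0 <= f X <= 1 by apply: hf; rewrite (subset_trans XE) // subsetUr.
have m1' : 0 <= 1 - mu a by rewrite subr_ge0.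
apply/andP; split.
  by rewrite addr_ge0 // mulr_ge0.
apply: le_trans (_ : mu a * 1 + (1 - mu a) * 1 <= 1).
  by rewrite lerD // ler_wpM2l.
by rewrite !mulr1 addrC subrK.
Qed.
End Bound.

Lemma perc_S (R : realType) T (E : {set {set T}}) (mu : {set T} -> R) (A : pred {set {set T}}) :
  perc_prob E mu A = S E mu (fun X => (A X)%:R).
Proof.
rewrite /perc_prob /S big_mkcondr; apply: eq_bigr => X _.
by case: (A X); rewrite ?mulr1 ?mulr0.
Qed.

Lemma S_affine (R : comNzRingType) T (E : {set {set T}}) (mu : {set T} -> R) c d (f : {set {set T}} -> R) :
  S E mu (fun X => c * f X + d) = c * S E mu f + d.
Proof.
have -> : d = d * S E mu (fun _ => 1) by rewrite S_const mulr1.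
rewrite -S_lin; apply: S_ext => X _; rewrite S_const; ring.
Qed.

Section Main.
Variables (R : realType) (V : finType) (e : rel V) (v : V) (I : {set {set V}}).
Hypothesis esym : symmetric e.
Hypothesis eirr : irreflexive e.
Variable mu : {set (V * bool)} -> R.

Local Notation Hs := (H_verts e v I).
Local Notation E := (bb_edges e).
Local Notation EH := (EH' e v I).
Local Notation EGp := (EG' e v I).
Local Notation E0 := (e0 v).

Definition pG := S EGp mu (fun X2 => (joined (v, false) (v, true) X2)%:R).
Definition q0 := mu E0 + (1 - mu E0) * pG.
Definition mu2 (ed : {set V * bool}) := if ed == E0 then q0 else mu ed.

Lemma e0_EH : E0 \notin EH.
Proof. by rewrite /EH' in_setD1 eqxx. Qed.

Lemma main_V p q : p \in setH e v I -> q \in setH e v I ->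
  bb_prob e mu p q = S (E0 |: EH) mu2 (fun X => (joined p q X)%:R).
Proof.
move=> pH qH.
rewrite /bb_prob perc_S (E_decomp v I esym) S_split; last exact: E_disj.
rewrite [LHS]S_OE ?e0_EH // [RHS]S_OE ?e0_EH //.
have m2 : mu2 E0 = q0 by rewrite /mu2 eqxx.
rewrite m2.
transitivity (S EH mu (fun X => q0 * (joined p q (E0 |: X))%:R + (1 - q0) * (joined p q X)%:R)); last first.
  apply: S_mu_ext => ed edE; rewrite /mu2; case: eqP => // edE0.
  by rewrite edE0 (negbTE e0_EH) in edE.
apply: S_ext => X XE.
have h1 : S EGp mu (fun X2 => (joined p q (E0 |: X :|: X2))%:R) = (joined p q (E0 |: X))%:R.
  rewrite -[RHS](S_const EGp mu); apply: S_ext => X2 X2E.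
  by have := joined_split esym true XE X2E pH qH => /= ->.
have h2 : S EGp mu (fun X2 => (joined p q (X :|: X2))%:R) =
    ((joined p q (E0 |: X))%:R - (joined p q X)%:R) * pG + (joined p q X)%:R.
  rewrite /pG -S_affine; apply: S_ext => X2 X2E.
  have := joined_split esym false XE X2E pH qH => /= ->.
  by case: (joined _ _ X2); rewrite /= ?mulr1n ?mulr0n; ring.
rewrite h1 h2 /q0; ring.
Qed.
Local Notation U := {x : V | x \in Hs}.
Definition emb (w : U * bool) : V * bool := (val w.1, w.2).

Lemma emb_inj : injective emb.
Proof. by move=> [a s] [b t] [/val_inj -> ->]. Qed.

Lemma emb_H w : emb w \in setH e v I.
Proof. by rewrite inSH /= (valP w.1). Qed.

Lemma hEU : [set emb @: ed | ed : {set U * bool} in bb_edges (induced e Hs)] = E0 |: EH.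
Proof.
rewrite /EH' setD1K ?e0_EHf //.
apply/setP => ed; apply/imsetP/idP.
  move=> [ed' ed'E ->]; move/bb_edgesP: ed'E => [p' [q' [-> h]]].
  rewrite imset_pair EHfE; apply/andP; split.
    apply/bb_edgesP; exists (emb p'), (emb q'); split => //.
  by apply/subsetP => w /set2P[] ->; exact: emb_H.
rewrite EHfE => /andP[/bb_edgesP[p [q [edE h]]] sH].
rewrite edE in sH; have [pH qH] := sub2 sH.
rewrite inSH in pH; rewrite inSH in qH.
exists [set (exist _ p.1 pH : U, p.2); (exist _ q.1 qH : U, q.2)].
  apply/bb_edgesP; eexists; eexists; split; first reflexivity.
  by rewrite /bb_adj /induced /= -val_eqE /=.
by rewrite edE imset_pair /emb /= -!surjective_pairing.
Qed.

Definition mu' (ed : {set U * bool}) := mu2 (emb @: ed).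

Lemma transp p' q' : bb_prob (induced e Hs) mu' p' q' = bb_prob e mu (emb p') (emb q').
Proof.
rewrite (main_V (emb_H p') (emb_H q')) -hEU S_transport; last exact: imset_inj emb_inj.
rewrite /bb_prob perc_S; apply: S_ext => X _.
by rewrite joined_transport //; exact: emb_inj.
Qed.

Hypothesis muw : is_weight E mu.
Hypothesis muS : bb_symmetric e mu.

Lemma ind_bound (b : bool) : 0 <= (b%:R : R) <= 1.
Proof. by case: b; rewrite /= ?ler01 ?lexx. Qed.

Lemma q0_bound : 0 <= q0 <= 1.
Proof.
have /andP[p0 p1] : 0 <= pG <= 1.
  apply: S_bound => [ed|X _]; last exact: ind_bound.
  by rewrite /EG' in_setD1 EGE => /and3P[_ edE _]; exact: muw.
have /andP[m0 m1] := muw (e0_E e v).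
have m1' : 0 <= 1 - mu E0 by rewrite subr_ge0.
rewrite /q0; apply/andP; split; first by rewrite addr_ge0 // mulr_ge0.
apply: le_trans (_ : mu E0 + (1 - mu E0) * 1 <= 1).
  by rewrite lerD // ler_wpM2l.
by rewrite mulr1 addrC subrK.
Qed.

Lemma mu'_w : is_weight (bb_edges (induced e Hs)) mu'.
Proof.
move=> ed' ed'E; rewrite /mu' /mu2.
have : emb @: ed' \in E0 |: EH by rewrite -hEU; apply: imset_f.
case: eqP => [_ _|_]; first exact: q0_bound.
rewrite in_setU1 /EH' in_setD1 EHfE => /orP[/eqP -> |/and3P[_ h _]].
  exact: muw (e0_E e v).
exact: muw.
Qed.

Lemma ne_e0 a b (s : bool) : [set (a, s); (b, s)] != E0.
Proof.
apply/eqP => h; have : (v, ~~ s) \in [set (a, s); (b, s)].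
  by rewrite h /e0; clear h; case: s; rewrite ?set21 ?set22.
by clear h; rewrite !inE !xpair_eqE; case: s; rewrite /= !andbF.
Qed.

Lemma mu'_s : bb_symmetric (induced e Hs) mu'.
Proof.
move=> a b ab; rewrite /mu' !imset_pair /emb /= /mu2 !(negbTE (ne_e0 _ _ _)).
exact: muS.
Qed.

End Main.


Unset Implicit Arguments.
Theorem lemma3p2 (R : realType) (V : finType) (e : rel V) (v : V)
  (I : {set {set V}}) :
  simple_graph e ->
  (2 <= #|comps e v|)%N ->
  I \subset comps e v ->
  bunkbed R (induced e (H_verts e v I)) ->
  forall mu : {set (V * bool)} -> R,
    is_weight (bb_edges e) mu -> bb_symmetric e mu ->
    forall x y : V, x \in H_verts e v I -> y \in H_verts e v I ->
      bb_prob e mu (x, false) (y, true) <= bb_prob e mu (x, false) (y, false).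
Proof.
move=> [esym eirr] _ _ Hbb mu muw muS x y xH yH.
have := Hbb _ (mu'_w (v:=v) (I:=I) muw) (mu'_s (v:=v) (I:=I) muS) (exist _ x xH) (exist _ y yH).
by rewrite !(transp esym eirr).
Qed.
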